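(* Suppose $\mathsf{E}\mathrm{d}(p_i^*,P_i)\le\lambda$ for every $i\in\{1,\dots,n\}$. Let $T_m$ be the minimum connected subtree of $T$ containing all the medians $p_1^*,\dots,p_n^*$. Then there is an optimal solution of the center-coverage problem (a minimum-cardinality set of points of $T$ such that every $P_i$ is covered by at least one of them) in which every center lies on $T_m$.
   Context: $T$ is a tree with positive edge lengths, edges regarded as segments, $d(\cdot,\cdot)$ the path-length distance. Uncertain point $P_i$ ($1\le i\le n$) has weight $w_i\ge0$ and locations $p_{ij}$ with probabilities $f_{ij}\ge0$ summing to $1$; $\mathsf{E}\mathrm{d}(x,P_i)=w_i\sum_j f_{ij}d(x,p_{ij})$. For each $i$, $p_i^*$ is a fixed vertex of $T$ minimizing $\mathsf{E}\mathrm{d}(x,P_i)$ over all points $x$ of $T$ (a median of $P_i$). A point $x$ covers $P_i$ if $\mathsf{E}\mathrm{d}(x,P_i)\le\lambda$, for a given $\lambda\ge 0$. *)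

(* Defs.v *)
From Stdlib Require Import Reals Lra List ClassicalEpsilon.
Import ListNotations.
Open Scope R_scope.

(* Vertices are the naturals 0..N-1.  An edge is ((a, b), len): a segment of
   length len joining vertex a to vertex b. *)
Definition edge := ((nat * nat) * R)%type.
Definition e_src (x : edge) : nat := fst (fst x).
Definition e_dst (x : edge) : nat := snd (fst x).
Definition e_len (x : edge) : R := snd x.
Definition edge_of (E : list edge) (e : nat) : edge := nth e E ((0%nat, 0%nat), 0).

Inductive walk (E : list edge) : nat -> nat -> R -> Prop :=
| walk_nil u : walk E u u 0
| walk_cons e u w v L :
    (e < length E)%nat ->
    ((e_src (edge_of E e) = u /\ e_dst (edge_of E e) = w) \/
     (e_dst (edge_of E e) = u /\ e_src (edge_of E e) = w)) ->
    walk E w v L -> walk E u v (e_len (edge_of E e) + L).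

Definition is_tree (N : nat) (E : list edge) : Prop :=
  (forall e, (e < length E)%nat ->
     (e_src (edge_of E e) < N)%nat /\ (e_dst (edge_of E e) < N)%nat /\
     e_src (edge_of E e) <> e_dst (edge_of E e) /\ 0 < e_len (edge_of E e)) /\
  (N = S (length E)) /\
  (forall u v, (u < N)%nat -> (v < N)%nat -> exists L, walk E u v L).

Definition is_vdist (E : list edge) (u v : nat) (L : R) : Prop :=
  walk E u v L /\ forall L', walk E u v L' -> L <= L'.
Definition vdist (E : list edge) (u v : nat) : R :=
  epsilon (inhabits 0) (is_vdist E u v).

(** Points of T: a vertex, or a point of edge e at distance t from its
    source endpoint e_src (0 <= t <= length of e). *)
Inductive pt : Type :=
| PV : nat -> pt
| PE : nat -> R -> pt.

Definition valid_pt (N : nat) (E : list edge) (x : pt) : Prop :=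
  match x with
  | PV v => (v < N)%nat
  | PE e t => (e < length E)%nat /\ 0 <= t /\ t <= e_len (edge_of E e)
  end.

Definition dpv (E : list edge) (x : pt) (v : nat) : R :=
  match x with
  | PV u => vdist E u v
  | PE e t => Rmin (t + vdist E (e_src (edge_of E e)) v)
                   ((e_len (edge_of E e) - t) + vdist E (e_dst (edge_of E e)) v)
  end.

Definition dist (E : list edge) (x y : pt) : R :=
  match x, y with
  | PV u, _ => dpv E y u
  | PE e s, PV v => dpv E x v
  | PE e s, PE f t =>
      if Nat.eq_dec e f then Rabs (s - t)
      else Rmin (s + dpv E y (e_src (edge_of E e)))
                ((e_len (edge_of E e) - s) + dpv E y (e_dst (edge_of E e)))
  end.

Definition sumR (m : nat) (g : nat -> R) : R :=
  fold_right Rplus 0 (map g (seq 0 m)).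

Definition Ed (E : list edge) (w : nat -> R) (m : nat -> nat)
  (loc : nat -> nat -> pt) (f : nat -> nat -> R) (x : pt) (i : nat) : R :=
  w i * sumR (m i) (fun j => f i j * dist E x (loc i j)).

(* A connected subset of a tree is one containing, with any two of its points,
   the whole (unique) path between them; z lies on the path from x to y iff
   d(x,z) + d(z,y) = d(x,y). *)
Definition connected_subset (N : nat) (E : list edge) (S : pt -> Prop) : Prop :=
  forall x y z, valid_pt N E x -> valid_pt N E y -> valid_pt N E z ->
    S x -> S y -> dist E x z + dist E z y = dist E x y -> S z.

Definition in_min_subtree (N : nat) (E : list edge) (n : nat) (p : nat -> nat)
  (x : pt) : Prop :=
  forall S : pt -> Prop, connected_subset N E S ->
    (forall i, (i < n)%nat -> S (PV (p i))) -> S x.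

Definition covers_all (E : list edge) (n : nat) (w : nat -> R) (m : nat -> nat)
  (loc : nat -> nat -> pt) (f : nat -> nat -> R) (lam : R) (C : list pt) : Prop :=
  forall i, (i < n)%nat -> exists c, In c C /\ Ed E w m loc f c i <= lam.

(* Main.v *)
Require Import Defs.
From Stdlib Require Import Reals List.
Open Scope R_scope.
From Stdlib Require Import Lra Lia ClassicalEpsilon Classical.
Import ListNotations.
Open Scope R_scope.

Lemma fold_plus_c c l : fold_right Rplus c l = fold_right Rplus 0 l + c.
Proof. induction l; simpl; [lra| rewrite IHl; lra]. Qed.

Lemma sumR_0 g : sumR 0 g = 0.
Proof. reflexivity. Qed.

Lemma sumR_S m g : sumR (S m) g = sumR m g + g m.
Proof.
  unfold sumR. rewrite seq_S, map_app, fold_right_app. simpl.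
  rewrite fold_plus_c. lra.
Qed.

Lemma sumR_ext m g h : (forall i, (i < m)%nat -> g i = h i) -> sumR m g = sumR m h.
Proof.
  induction m; intros H; [reflexivity|].
  rewrite !sumR_S, IHm by (intros; apply H; lia). rewrite H by lia. reflexivity.
Qed.

Lemma sumR_le m g h : (forall i, (i < m)%nat -> g i <= h i) -> sumR m g <= sumR m h.
Proof.
  induction m; intros H; [unfold sumR; simpl; lra|].
  rewrite !sumR_S. assert (H1 := IHm (fun i Hi => H i ltac:(lia))). specialize (H m ltac:(lia)). lra.
Qed.

Lemma sumR_lt m g h e : (forall i, (i < m)%nat -> g i <= h i) -> (e < m)%nat -> g e < h e ->
  sumR m g < sumR m h.
Proof.
  induction m; intros H He Hlt; [lia|].
  rewrite !sumR_S. destruct (Nat.eq_dec e m).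
  - subst. pose proof (sumR_le m g h (fun i Hi => H i ltac:(lia))). lra.
  - specialize (IHm (fun i Hi => H i ltac:(lia)) ltac:(lia) Hlt). specialize (H m ltac:(lia)). lra.
Qed.

Lemma sumR_plus m g h : sumR m (fun i => g i + h i) = sumR m g + sumR m h.
Proof. induction m; [unfold sumR; simpl; lra|]. rewrite !sumR_S, IHm. lra. Qed.

Lemma sumR_scal m c g : sumR m (fun i => c * g i) = c * sumR m g.
Proof. induction m; [unfold sumR; simpl; lra|]. rewrite !sumR_S, IHm. lra. Qed.

Lemma sumR_eq_le m g h : (forall i, (i < m)%nat -> g i <= h i) -> sumR m g = sumR m h ->
  forall i, (i < m)%nat -> g i = h i.
Proof.
  induction m; intros H Heq i Hi; [lia|].
  rewrite !sumR_S in Heq.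
  pose proof (sumR_le m g h (fun i Hi => H i ltac:(lia))).
  pose proof (H m ltac:(lia)).
  assert (g m = h m) by lra.
  assert (sumR m g = sumR m h) by lra.
  destruct (Nat.eq_dec i m); [subst; auto|].
  apply IHm; auto; try lia.
Qed.

Lemma sumR_split m g e : (e < m)%nat ->
  sumR m g = g e + sumR m (fun i => if Nat.eq_dec i e then 0 else g i).
Proof.
  induction m; intros He; [lia|].
  rewrite !sumR_S. destruct (Nat.eq_dec m e).
  - subst. rewrite (sumR_ext e (fun i => if Nat.eq_dec i e then 0 else g i) g).
    + lra.
    + intros i Hi. destruct (Nat.eq_dec i e); [lia|auto].
  - rewrite IHm by lia. lra.
Qed.

Lemma sumR_single m g e : (e < m)%nat -> (forall i, (i < m)%nat -> i <> e -> g i = 0) ->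
  sumR m g = g e.
Proof.
  intros He H. rewrite (sumR_split m g e He).
  rewrite (sumR_ext m _ (fun _ => 0)).
  - enough (sumR m (fun _ => 0) = 0) by lra.
    clear. induction m; [reflexivity| rewrite sumR_S, IHm; lra].
  - intros i Hi. destruct (Nat.eq_dec i e); auto.
Qed.

Close Scope R_scope.

Inductive reach (Es : list (nat*nat)) : nat -> nat -> Prop :=
| r_refl u : reach Es u u
| r_step u v w : (In (u,v) Es \/ In (v,u) Es) -> reach Es v w -> reach Es u w.

Lemma reach_trans Es u v w : reach Es u v -> reach Es v w -> reach Es u w.
Proof. induction 1; intros; auto. econstructor; eauto. Qed.

Lemma reach_sym Es u v : reach Es u v -> reach Es v u.
Proof.
  induction 1; [constructor|].
  apply reach_trans with v; auto. econstructor; [|constructor]. tauto.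
Qed.

Lemma reach_cons Es a b u v : reach ((a,b)::Es) u v ->
  reach Es u v \/ ((reach Es u a \/ reach Es u b) /\ (reach Es v a \/ reach Es v b)).
Proof.
  induction 1 as [u|u x w Hin Hr IH].
  - left; constructor.
  - simpl in Hin. destruct Hin as [[Heq|Hin]|[Heq|Hin]].
    + inversion Heq; subst. destruct IH as [IH|[IH1 IH2]].
      * right. split; [left; constructor|]. right. apply reach_sym; auto.
      * right; split; auto. left; constructor.
    + destruct IH as [IH|[IH1 IH2]].
      * left. econstructor; eauto.
      * right. split; auto. destruct IH1; [left|right]; econstructor; eauto.
    + inversion Heq; subst. destruct IH as [IH|[IH1 IH2]].
      * right. split; [right; constructor|]. left. apply reach_sym; auto.
      * right; split; auto. right; constructor.
    + destruct IH as [IH|[IH1 IH2]].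
      * left. econstructor; eauto.
      * right. split; auto. destruct IH1; [left|right]; econstructor; eauto.
Qed.

Fixpoint PW (Es : list (nat*nat)) (R : list nat) : Prop :=
  match R with
  | [] => True
  | r :: R' => (forall x, In x R' -> ~ reach Es r x) /\ PW Es R'
  end.

Definition notreach Es b x : bool :=
  if excluded_middle_informative (reach Es x b) then false else true.

Lemma filter_all_true {A} (P : A -> bool) l : (forall x, In x l -> P x = true) -> filter P l = l.
Proof. induction l; simpl; intros H; auto. rewrite H by auto. rewrite IHl; auto. Qed.

Lemma PW_filter Es P R : PW Es R -> PW Es (filter P R).
Proof.
  induction R; simpl; auto. intros [H1 H2]. destruct (P a); simpl; auto.
  split; auto. intros x Hx. apply filter_In in Hx. apply H1; tauto.
Qed.

Lemma PW_filter_len Es b R : PW Es R -> (length R <= S (length (filter (notreach Es b) R)))%nat.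
Proof.
  induction R; simpl; intros HP; [lia|]. destruct HP as [H1 H2].
  unfold notreach at 1. destruct (excluded_middle_informative (reach Es a b)).
  - rewrite filter_all_true; [lia|].
    intros x Hx. unfold notreach. destruct (excluded_middle_informative (reach Es x b)); auto.
    exfalso. apply (H1 x Hx). apply reach_trans with b; auto. apply reach_sym; auto.
  - simpl. specialize (IHR H2). lia.
Qed.

Lemma PW_seq s k : PW [] (seq s k).
Proof.
  revert s; induction k; simpl; auto. intros s. split; auto.
  intros x Hx Hr. apply in_seq in Hx. inversion Hr; subst; [lia|]. simpl in H; tauto.
Qed.

Lemma count_lemma N Es : exists R, PW Es R /\ (forall x, In x R -> (x < N)%nat) /\
  (N <= length R + length Es)%nat.
Proof.
  induction Es as [|[a b] Es IH].
  - exists (seq 0 N). split; [apply PW_seq|]. split.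
    + intros x Hx; apply in_seq in Hx; lia.
    + rewrite length_seq; simpl; lia.
  - destruct IH as [R [HPW [Hlt Hlen]]].
    exists (filter (notreach Es b) R). split; [|split].
    + assert (HPW' := PW_filter Es (notreach Es b) R HPW).
      assert (Hnb : forall x, In x (filter (notreach Es b) R) -> ~ reach Es x b).
      { intros x Hx. apply filter_In in Hx. unfold notreach in Hx.
        destruct (excluded_middle_informative (reach Es x b)); auto. destruct Hx; discriminate. }
      revert HPW' Hnb. generalize (filter (notreach Es b) R). clear.
      induction l as [|r l IHl]; simpl; auto. intros [H1 H2] Hnb. split.
      * intros x Hx Hr. apply reach_cons in Hr. destruct Hr as [Hr|[[Ha|Hb] [Hxa|Hxb]]].
        -- apply (H1 x Hx Hr).
        -- apply (H1 x Hx). apply reach_trans with a; auto. apply reach_sym; auto.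
        -- apply (Hnb x); auto.
        -- apply (Hnb r); auto.
        -- apply (Hnb r); auto.
      * apply IHl; auto.
    + intros x Hx. apply filter_In in Hx. apply Hlt; tauto.
    + pose proof (PW_filter_len Es b R HPW). simpl. lia.
Qed.

Section Tree.
Variable N : nat.
Variable E : list edge.
Hypothesis Hedge : forall e, (e < length E)%nat ->
     (e_src (edge_of E e) < N)%nat /\ (e_dst (edge_of E e) < N)%nat /\
     e_src (edge_of E e) <> e_dst (edge_of E e) /\ (0 < e_len (edge_of E e))%R.
Hypothesis HN : N = S (length E).
Hypothesis Hconn : forall u v, (u < N)%nat -> (v < N)%nat -> exists L, walk E u v L.

Definition src e := e_src (edge_of E e).
Definition dst e := e_dst (edge_of E e).
Definition len e := e_len (edge_of E e).
Definition adj e u w := (src e = u /\ dst e = w) \/ (dst e = u /\ src e = w).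

Inductive walkx (f : nat) : nat -> nat -> Prop :=
| wx_nil u : walkx f u u
| wx_cons e u w v : (e < length E)%nat -> e <> f -> adj e u w -> walkx f w v -> walkx f u v.

Lemma walkx_trans f u v w : walkx f u v -> walkx f v w -> walkx f u w.
Proof. induction 1; intros; auto. econstructor; eauto. Qed.

Lemma walkx_step f e u w : (e < length E)%nat -> e <> f -> adj e u w -> walkx f u w.
Proof. intros. econstructor; eauto. constructor. Qed.

Lemma adj_sym e u w : adj e u w -> adj e w u.
Proof. unfold adj; tauto. Qed.

Lemma walkx_sym f u v : walkx f u v -> walkx f v u.
Proof.
  induction 1; [constructor|]. apply walkx_trans with w; auto.
  eapply walkx_step; eauto. apply adj_sym; auto.
Qed.

Lemma adj_src e : adj e (src e) (dst e).
Proof. left; auto. Qed.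

Lemma walk_sides u w L : walk E u w L -> forall f,
  walkx f u w \/ walkx f u (src f) \/ walkx f u (dst f).
Proof.
  induction 1 as [u|e u x v L' He Hadj Hw IH]; intros f.
  - left; constructor.
  - destruct (Nat.eq_dec e f).
    + subst. right. destruct Hadj as [[H1 H2]|[H1 H2]]; subst; [left|right]; constructor.
    + assert (Hux : walkx f u x) by (eapply walkx_step; eauto).
      destruct (IH f) as [H0|[H0|H0]]; [left|right;left|right;right]; eapply walkx_trans; eauto.
Qed.

Lemma side2 f v : (f < length E)%nat -> (v < N)%nat -> walkx f v (src f) \/ walkx f v (dst f).
Proof.
  intros Hf Hv. destruct (Hedge f Hf) as [Hs _].
  destruct (Hconn v (src f) Hv Hs) as [L HL].
  destruct (walk_sides _ _ _ HL f) as [H|[H|H]]; auto.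
Qed.

Lemma edge_list_len f : (f < length E)%nat ->
  (length (filter (fun e => negb (Nat.eqb e f)) (seq 0 (length E))) < length E)%nat.
Proof.
  intros Hf. assert (Hin : In f (seq 0 (length E))) by (apply in_seq; lia).
  rewrite <- (length_seq (length E) 0) at 2. revert Hin. generalize (seq 0 (length E)).
  induction l; simpl; intros Hin; [tauto|].
  destruct Hin as [<-|Hin].
  - rewrite Nat.eqb_refl. simpl.
    assert (forall l, length (filter (fun e => negb (e =? a)%nat) l) <= length l)%nat.
    { induction l0; simpl; auto. destruct (negb _); simpl; lia. }
    specialize (H l). lia.
  - specialize (IHl Hin). destruct (negb _); simpl; lia.
Qed.

Lemma bridge f : (f < length E)%nat -> ~ walkx f (src f) (dst f).
Proof.
  intros Hf Hw.
  set (Es := map (fun e => (src e, dst e)) (filter (fun e => negb (Nat.eqb e f)) (seq 0 (length E)))).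
  assert (Hall : forall u v, (u < N)%nat -> (v < N)%nat -> walkx f u v).
  { intros u v Hu Hv.
    assert (Hu' : walkx f u (src f)).
    { destruct (side2 f u Hf Hu); auto. eapply walkx_trans; eauto. apply walkx_sym; auto. }
    assert (Hv' : walkx f v (src f)).
    { destruct (side2 f v Hf Hv); auto. eapply walkx_trans; eauto. apply walkx_sym; auto. }
    eapply walkx_trans; eauto. apply walkx_sym; auto. }
  assert (Hre : forall u v, walkx f u v -> reach Es u v).
  { induction 1 as [|e u w v He Hef Hadj _ IH]; [constructor|].
    apply r_step with w; auto.
    assert (In (src e, dst e) Es).
    { unfold Es. apply in_map_iff. exists e. split; [reflexivity|]. apply filter_In. split; [apply in_seq; lia|].
      apply Bool.negb_true_iff. apply Nat.eqb_neq; auto. }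
    destruct Hadj as [[<- <-]|[<- <-]]; auto. }
  destruct (count_lemma N Es) as [R [HPW [Hlt Hlen]]].
  assert (Hl : length Es = length (filter (fun e => negb (Nat.eqb e f)) (seq 0 (length E)))) by
    (unfold Es; apply length_map).
  pose proof (edge_list_len f Hf).
  destruct R as [|r1 [|r2 R]]; simpl in Hlen; try lia.
  destruct HPW as [H1 _]. apply (H1 r2); [simpl; auto|].
  apply Hre, Hall; apply Hlt; simpl; auto.
Qed.


Open Scope R_scope.

Definition hv f v : R := if excluded_middle_informative (walkx f v (src f)) then 0 else len f.
Definition hp f x : R := match x with
  | PV v => hv f v
  | PE e s => if Nat.eq_dec f e then s else hv f (src e) end.
Definition D x y := sumR (length E) (fun f => Rabs (hp f x - hp f y)).

Lemma D_sym x y : D x y = D y x.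
Proof. unfold D. apply sumR_ext. intros. rewrite Rabs_minus_sym. auto. Qed.

Lemma D_tri x y z : D x z <= D x y + D y z.
Proof.
  unfold D. rewrite <- sumR_plus. apply sumR_le. intros.
  replace (hp i x - hp i z) with ((hp i x - hp i y) + (hp i y - hp i z)) by ring.
  apply Rabs_triang.
Qed.

Lemma D_refl x : D x x = 0.
Proof.
  unfold D. rewrite (sumR_ext _ _ (fun _ => 0)).
  - clear. induction (length E); [reflexivity| rewrite sumR_S, IHn; lra].
  - intros. replace (hp i x - hp i x) with 0 by ring. apply Rabs_R0.
Qed.

Lemma hv_walkx f u v : walkx f u v -> hv f u = hv f v.
Proof.
  intros H. unfold hv.
  destruct (excluded_middle_informative (walkx f u (src f))) as [H1|H1];
  destruct (excluded_middle_informative (walkx f v (src f))) as [H2|H2]; auto.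
  - exfalso. apply H2. eapply walkx_trans; eauto. apply walkx_sym; auto.
  - exfalso. apply H1. eapply walkx_trans; eauto.
Qed.

Lemma hv_src f : hv f (src f) = 0.
Proof. unfold hv. destruct (excluded_middle_informative _) as [|n]; auto. exfalso; apply n; constructor. Qed.

Lemma hv_dst f : (f < length E)%nat -> hv f (dst f) = len f.
Proof.
  intros Hf. unfold hv. destruct (excluded_middle_informative _) as [H|]; auto.
  exfalso. apply (bridge f Hf). apply walkx_sym; auto.
Qed.

Lemma hv_bin f v : hv f v = 0 \/ hv f v = len f.
Proof. unfold hv. destruct (excluded_middle_informative _); auto. Qed.

Lemma len_pos f : (f < length E)%nat -> 0 < len f.
Proof. intros Hf. destruct (Hedge f Hf) as [_ [_ [_ H]]]. exact H. Qed.

Lemma hv_range f v : (f < length E)%nat -> 0 <= hv f v <= len f.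
Proof. intros Hf. pose proof (len_pos f Hf). destruct (hv_bin f v) as [->| ->]; lra. Qed.

Lemma hv_eq_walkx f u v : (f < length E)%nat -> (u < N)%nat -> (v < N)%nat ->
  hv f u = hv f v -> walkx f u v.
Proof.
  intros Hf Hu Hv Heq. unfold hv in Heq. pose proof (len_pos f Hf).
  destruct (excluded_middle_informative (walkx f u (src f))) as [H1|H1];
  destruct (excluded_middle_informative (walkx f v (src f))) as [H2|H2]; try lra.
  - eapply walkx_trans; eauto. apply walkx_sym; auto.
  - destruct (side2 f u Hf Hu); [tauto|]. destruct (side2 f v Hf Hv); [tauto|].
    eapply walkx_trans; eauto. apply walkx_sym; auto.
Qed.

Lemma hv_adj f e u w : (e < length E)%nat -> e <> f -> adj e u w -> hv f u = hv f w.
Proof. intros. apply hv_walkx. eapply walkx_step; eauto. Qed.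

Lemma hv_adj_e e u w : (e < length E)%nat -> adj e u w -> Rabs (hv e u - hv e w) = len e.
Proof.
  intros He [[<- <-]|[<- <-]]; rewrite hv_src, hv_dst by auto; pose proof (len_pos e He).
  - rewrite Rabs_left by lra. ring.
  - rewrite Rabs_right by lra. ring.
Qed.

Lemma struct_walk f e u v : walkx f u v -> ~ walkx f u (src e) -> walkx e u v.
Proof.
  induction 1 as [|g u w v Hg Hgf Hadj Hw IH]; intros Hn; [constructor|].
  assert (g <> e).
  { intros ->. destruct Hadj as [[H1 H2]|[H1 H2]].
    - apply Hn. rewrite H1. constructor.
    - apply Hn. eapply walkx_step; eauto. rewrite <- H1. right; auto. }
  eapply wx_cons; eauto. apply IH. intros Hw'. apply Hn.
  eapply walkx_trans; [|exact Hw']. eapply walkx_step; eauto.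
Qed.

Lemma KS f e u v : (f < length E)%nat -> (u < N)%nat -> (v < N)%nat ->
  hv f u = hv f v -> hv f u <> hv f (src e) -> hv e u = hv e v.
Proof.
  intros Hf Hu Hv H1 H2. apply hv_walkx. apply struct_walk with f.
  - apply hv_eq_walkx; auto.
  - intros Hw. apply H2. apply hv_walkx; auto.
Qed.

Lemma step_D e u w : (e < length E)%nat -> adj e u w -> D (PV u) (PV w) = len e.
Proof.
  intros He Hadj. unfold D. simpl. rewrite (sumR_single _ _ e He).
  - apply hv_adj_e; auto.
  - intros f Hf Hfe. rewrite (hv_adj f e u w) by auto.
    replace (hv f w - hv f w) with 0 by ring. apply Rabs_R0.
Qed.

Lemma walk_lb u v L : walk E u v L -> D (PV u) (PV v) <= L.
Proof.
  induction 1 as [u|e u w v L He Hadj Hw IH].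
  - rewrite D_refl. lra.
  - pose proof (D_tri (PV u) (PV w) (PV v)). rewrite (step_D e u w He) in H by exact Hadj.
    unfold len in H. lra.
Qed.

Inductive wk : nat -> nat -> nat -> Prop :=
| wk_nil u : wk 0 u u
| wk_cons n e u w v : (e < length E)%nat -> adj e u w -> wk n w v -> wk (S n) u v.

Lemma walk_wk u v L : walk E u v L -> exists n, wk n u v.
Proof.
  induction 1 as [u|e u w v L He Hadj Hw IH].
  - exists 0%nat; constructor.
  - destruct IH as [n Hn]. exists (S n). econstructor; eauto.
Qed.

Lemma wk_split e0 n w v : wk n w v -> ~ walkx e0 w v ->
  exists x y m, (m < n)%nat /\ walkx e0 w x /\ adj e0 x y /\ wk m y v.
Proof.
  induction 1 as [u|n g u w' v Hg Hadj Hw IH]; intros Hn.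
  - exfalso; apply Hn; constructor.
  - destruct (Nat.eq_dec g e0).
    + subst. exists u, w', n. repeat split; auto. constructor.
    + assert (Huw : walkx e0 u w') by (eapply walkx_step; eauto).
      destruct IH as [x [y [m [Hm [H1 [H2 H3]]]]]].
      { intros H. apply Hn. eapply walkx_trans; eauto. }
      exists x, y, m. repeat split; auto. eapply walkx_trans; eauto.
Qed.

Lemma hv_ne_bin f a b : (f < length E)%nat -> hv f a <> hv f b -> hv f a = hv f b -> False.
Proof. auto. Qed.

Lemma tight_aux n : forall u v, wk n u v -> walk E u v (D (PV u) (PV v)).
Proof.
  induction n as [n IHn] using (well_founded_induction Wf_nat.lt_wf).
  intros u v Hw. destruct Hw as [u|n e u w v He Hadj Hw].
  - rewrite D_refl. constructor.
  - destruct (Req_dec_T (hv e u) (hv e v)) as [Heq|Hne].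
    + (* e does not separate u and v *)
      assert (Hwu : hv e w <> hv e u).
      { intros H. pose proof (hv_adj_e e u w He Hadj). pose proof (len_pos e He).
        rewrite H in H0. replace (hv e u - hv e u) with 0 in H0 by ring. rewrite Rabs_R0 in H0. lra. }
      destruct (wk_split e n w v Hw) as [x [y [m [Hm [H1 [H2 H3]]]]]].
      { intros Hx. apply hv_walkx in Hx. congruence. }
      assert (x = w /\ y = u).
      { destruct Hadj as [[A1 A2]|[A1 A2]]; destruct H2 as [[B1 B2]|[B1 B2]]; subst;
        try (split; auto; fail);
        exfalso; apply hv_walkx in H1; congruence. }
      destruct H as [-> ->]. apply (IHn m); auto.
    + assert (Hsum : D (PV u) (PV v) = len e + D (PV w) (PV v)).
      { unfold D; simpl. rewrite (sumR_split _ _ e He).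
        rewrite (sumR_split _ (fun f => Rabs (hv f w - hv f v)) e He).
        rewrite (sumR_ext _ (fun i => if Nat.eq_dec i e then 0 else Rabs (hv i u - hv i v))
                   (fun i => if Nat.eq_dec i e then 0 else Rabs (hv i w - hv i v))).
        - pose proof (hv_adj_e e u w He Hadj). pose proof (len_pos e He).
          destruct (hv_bin e u) as [A|A]; destruct (hv_bin e v) as [B|B];
          destruct (hv_bin e w) as [C|C]; rewrite A, B in *; try rewrite C in *;
          try lra; unfold Rabs in *; repeat destruct Rcase_abs; lra.
        - intros f Hf. destruct (Nat.eq_dec f e); auto. rewrite (hv_adj f e u w); auto. }
      rewrite Hsum. econstructor; [exact He|exact Hadj|apply (IHn n); auto].
Qed.

Lemma vdist_D u v : (u < N)%nat -> (v < N)%nat -> vdist E u v = D (PV u) (PV v).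
Proof.
  intros Hu Hv. destruct (Hconn u v Hu Hv) as [L HL].
  destruct (walk_wk _ _ _ HL) as [n Hn].
  assert (Hi : is_vdist E u v (D (PV u) (PV v))).
  { split; [apply (tight_aux n); auto|]. apply walk_lb. }
  unfold vdist. destruct (epsilon_spec (inhabits 0) (is_vdist E u v) (ex_intro _ _ Hi)) as [H1 H2].
  destruct Hi as [H3 H4]. specialize (H2 _ H3). specialize (H4 _ H1). lra.
Qed.

Lemma GEN m e (al be ga ta : nat -> R) s L : (e < m)%nat ->
  (forall f, (f < m)%nat -> f <> e -> al f = be f /\ al f = ga f) ->
  be e = 0 -> ga e = L -> al e = s -> 0 <= s <= L -> (ta e = 0 \/ ta e = L) ->
  Rmin (s + sumR m (fun f => Rabs (be f - ta f))) (L - s + sumR m (fun f => Rabs (ga f - ta f)))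
  = sumR m (fun f => Rabs (al f - ta f)).
Proof.
  intros He Hf Hb Hg Ha Hs Ht.
  rewrite (sumR_split m (fun f => Rabs (be f - ta f)) e He).
  rewrite (sumR_split m (fun f => Rabs (ga f - ta f)) e He).
  rewrite (sumR_split m (fun f => Rabs (al f - ta f)) e He).
  rewrite (sumR_ext m (fun i => if Nat.eq_dec i e then 0 else Rabs (be i - ta i))
     (fun i => if Nat.eq_dec i e then 0 else Rabs (al i - ta i))).
  rewrite (sumR_ext m (fun i => if Nat.eq_dec i e then 0 else Rabs (ga i - ta i))
     (fun i => if Nat.eq_dec i e then 0 else Rabs (al i - ta i))).
  - set (X := sumR m _). rewrite Hb, Hg, Ha.
    destruct Ht as [-> | ->]; unfold Rmin; repeat destruct Rle_dec; unfold Rabs in *;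
      repeat destruct Rcase_abs; lra.
  - intros f Hf'. destruct (Nat.eq_dec f e); auto. destruct (Hf f Hf' n); congruence.
  - intros f Hf'. destruct (Nat.eq_dec f e); auto. destruct (Hf f Hf' n); congruence.
Qed.

Lemma hv_src_dst f e : (e < length E)%nat -> e <> f -> hv f (src e) = hv f (dst e).
Proof. intros. apply (hv_adj f e); auto. left; auto. Qed.

Lemma src_lt e : (e < length E)%nat -> (src e < N)%nat.
Proof. intros He. apply (Hedge e He). Qed.
Lemma dst_lt e : (e < length E)%nat -> (dst e < N)%nat.
Proof. intros He. apply (Hedge e He). Qed.

Lemma hp_range f x : (f < length E)%nat -> valid_pt N E x -> 0 <= hp f x <= len f.
Proof.
  intros Hf Hx. destruct x as [v|e s]; simpl.
  - apply hv_range; auto.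
  - destruct (Nat.eq_dec f e); [subst; simpl in Hx; unfold len; lra|apply hv_range; auto].
Qed.

Lemma hp_bin f x : (forall s, x <> PE f s) -> hp f x = 0 \/ hp f x = len f.
Proof.
  intros H. destruct x as [v|e s]; simpl; [apply hv_bin|].
  destruct (Nat.eq_dec f e); [subst; exfalso; apply (H s); auto|apply hv_bin].
Qed.

Lemma dpv_D e s v : (e < length E)%nat -> 0 <= s <= len e -> (v < N)%nat ->
  dpv E (PE e s) v = D (PE e s) (PV v).
Proof.
  intros He Hs Hv. unfold dpv. change (e_src (edge_of E e)) with (src e).
  change (e_dst (edge_of E e)) with (dst e). rewrite (vdist_D (src e) v), (vdist_D (dst e) v)
    by (first [apply src_lt; auto | apply dst_lt; auto | auto]).
  change (e_len (edge_of E e)) with (len e). unfold D.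
  apply (GEN (length E) e (fun f => hp f (PE e s)) (fun f => hv f (src e)) (fun f => hv f (dst e))
     (fun f => hv f v)); auto.
  - intros f Hf Hfe. simpl. destruct (Nat.eq_dec f e); [tauto|]. split; auto.
    apply hv_src_dst; auto.
  - apply hv_src.
  - apply hv_dst; auto.
  - simpl. destruct (Nat.eq_dec e e); tauto.
  - apply hv_bin.
Qed.

Lemma dist_D x y : valid_pt N E x -> valid_pt N E y -> Defs.dist E x y = D x y.
Proof.
  intros Hx Hy. destruct x as [u|e s]; destruct y as [v|e' t]; simpl in Hx, Hy.
  - change (Defs.dist E (PV u) (PV v)) with (vdist E v u). rewrite vdist_D by auto. apply D_sym.
  - change (Defs.dist E (PV u) (PE e' t)) with (dpv E (PE e' t) u).
    rewrite dpv_D by (unfold len; tauto). apply D_sym.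
  - change (Defs.dist E (PE e s) (PV v)) with (dpv E (PE e s) v).
    rewrite dpv_D by (unfold len; tauto). auto.
  - change (Defs.dist E (PE e s) (PE e' t)) with
      (if Nat.eq_dec e e' then Rabs (s - t)
      else Rmin (s + dpv E (PE e' t) (e_src (edge_of E e)))
                ((e_len (edge_of E e) - s) + dpv E (PE e' t) (e_dst (edge_of E e)))).
    destruct (Nat.eq_dec e e').
    + subst. unfold D. rewrite (sumR_single _ _ e') by (tauto ||
        (intros f Hf Hfe; simpl; destruct (Nat.eq_dec f e'); [tauto|];
         replace (hv f (src e') - hv f (src e')) with 0 by ring; apply Rabs_R0)).
      simpl. destruct (Nat.eq_dec e' e'); tauto.
    + change (e_src (edge_of E e)) with (src e). change (e_dst (edge_of E e)) with (dst e).
      rewrite (dpv_D e' t (src e)), (dpv_D e' t (dst e))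
        by (unfold len; try tauto; first [apply src_lt; tauto | apply dst_lt; tauto]).
      rewrite (D_sym (PE e' t)), (D_sym (PE e' t)).
      change (e_len (edge_of E e)) with (len e). unfold D.
      apply (GEN (length E) e (fun f => hp f (PE e s)) (fun f => hv f (src e)) (fun f => hv f (dst e))
         (fun f => hp f (PE e' t))).
      * tauto.
      * intros f Hf Hfe. simpl. destruct (Nat.eq_dec f e); [tauto|]. split; auto.
        apply hv_src_dst; [tauto|congruence].
      * apply hv_src.
      * apply hv_dst; tauto.
      * simpl. destruct (Nat.eq_dec e e); tauto.
      * simpl. unfold len; lra.
      * simpl. destruct (Nat.eq_dec e e'); [tauto|]. apply hv_bin.
Qed.

Definition btw a b c := Rabs (a - b) + Rabs (b - c) = Rabs (a - c).

Lemma btw_bin x z y L : 0 <= x <= L -> 0 <= y <= L -> (z = 0 \/ z = L) -> 0 < L ->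
  (btw x z y <-> x = z \/ y = z).
Proof.
  intros Hx Hy Hz HL. unfold btw. split.
  - intros H. destruct (Req_dec_T x z); auto. destruct (Req_dec_T y z); auto. exfalso.
    destruct Hz; subst; unfold Rabs in *; repeat destruct Rcase_abs; lra.
  - intros [<-| <-]; unfold Rabs; repeat destruct Rcase_abs; lra.
Qed.

Lemma bin3 a b c L : (a = 0 \/ a = L) -> (b = 0 \/ b = L) -> (c = 0 \/ c = L) ->
  a <> c -> b <> c -> a = b.
Proof. intros [->| ->] [->| ->] [->| ->]; intros; congruence. Qed.

Lemma D_nonneg x y : 0 <= D x y.
Proof.
  unfold D. apply Rle_trans with (sumR (length E) (fun _ => 0)).
  - right. clear. induction (length E); [reflexivity| rewrite sumR_S, <- IHn; lra].
  - apply sumR_le. intros; apply Rabs_pos.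
Qed.

Lemma D_btw x z y : (forall f, (f < length E)%nat -> btw (hp f x) (hp f z) (hp f y)) ->
  D x z + D z y = D x y.
Proof.
  intros H. unfold D. rewrite <- sumR_plus. apply sumR_ext. intros f Hf. apply H; auto.
Qed.

Lemma btw_D x z y : D x z + D z y = D x y ->
  (forall f, (f < length E)%nat -> btw (hp f x) (hp f z) (hp f y)).
Proof.
  intros H. unfold D in H. rewrite <- sumR_plus in H. intros f Hf. unfold btw. symmetry.
  apply (sumR_eq_le (length E) (fun f => Rabs (hp f x - hp f y))
    (fun i => Rabs (hp i x - hp i z) + Rabs (hp i z - hp i y))); auto.
  intros i Hi. replace (hp i x - hp i y) with ((hp i x - hp i z) + (hp i z - hp i y)) by ring.
  apply Rabs_triang.
Qed.

Lemma rep x f g A B : valid_pt N E x -> (f < length E)%nat -> (g < length E)%nat -> f <> g ->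
  (A = 0 \/ A = len f) -> (B = 0 \/ B = len g) -> hp f x <> A -> hp g x <> B ->
  exists w, (w < N)%nat /\ hv f w <> A /\ hv g w <> B.
Proof.
  intros Hx Hf Hg Hfg HA HB H1 H2. pose proof (len_pos f Hf). pose proof (len_pos g Hg).
  destruct x as [u|e t]; simpl in *.
  - exists u; auto.
  - destruct (Nat.eq_dec f e) as [->|Hfe]; [|destruct (Nat.eq_dec g e) as [->|Hge]].
    + destruct (Nat.eq_dec g e); [congruence|].
      destruct HA as [->| ->].
      * exists (dst e). split; [apply dst_lt; tauto|]. rewrite hv_dst by tauto.
        split; [lra|]. rewrite <- hv_src_dst; auto.
      * exists (src e). split; [apply src_lt; tauto|]. rewrite hv_src. split; [lra|auto].
    + destruct HB as [->| ->].
      * exists (dst e). split; [apply dst_lt; tauto|]. rewrite hv_dst by tauto.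
        split; [|lra]. rewrite <- hv_src_dst; auto.
      * exists (src e). split; [apply src_lt; tauto|]. rewrite hv_src. split; [auto|lra].
    + exists (src e). split; [apply src_lt; tauto|]. auto.
Qed.

Lemma argmin_nat (P : nat -> Prop) (g : nat -> R) M : (exists v, (v < M)%nat /\ P v) ->
  exists v, (v < M)%nat /\ P v /\ forall v', (v' < M)%nat -> P v' -> g v <= g v'.
Proof.
  induction M; intros [v [Hv HP]]; [lia|].
  destruct (classic (exists v, (v < M)%nat /\ P v)) as [Hex|Hnex].
  - destruct (IHM Hex) as [v0 [Hv0 [HP0 Hmin]]].
    destruct (classic (P M /\ g M < g v0)) as [[HPM Hlt]|Hno].
    + exists M. split; [lia|]. split; auto. intros v' Hv' HPv'.
      destruct (Nat.eq_dec v' M); [subst; lra|]. specialize (Hmin v' ltac:(lia) HPv'). lra.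
    + exists v0. split; [lia|]. split; auto. intros v' Hv' HPv'.
      destruct (Nat.eq_dec v' M); [subst|apply Hmin; auto; lia].
      destruct (Rle_dec (g v0) (g M)); auto. exfalso; apply Hno; split; auto; lra.
  - exists M. split; [lia|]. assert (v = M).
    { destruct (Nat.eq_dec v M); auto. exfalso; apply Hnex; exists v; split; auto; lia. }
    subst. split; auto. intros v' Hv' HPv'. destruct (Nat.eq_dec v' M); [subst; lra|].
    exfalso; apply Hnex; exists v'; split; auto; lia.
Qed.

Lemma hv_binL f v : (f < length E)%nat -> hv f v = 0 \/ hv f v = len f.
Proof. intros; apply hv_bin. Qed.

Lemma convex_D c q v w : valid_pt N E c -> valid_pt N E q -> (v < N)%nat -> (w < N)%nat ->
  D c (PV v) + D (PV v) (PV w) = D c (PV w) ->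
  (D c (PV v) + D (PV v) (PV w)) * D (PV v) q <=
     D (PV v) (PV w) * D c q + D c (PV v) * D (PV w) q.
Proof.
  intros Hc Hq Hv Hw Hb.
  assert (Hbf := btw_D _ _ _ Hb). simpl in Hbf.
  assert (Hdich : (forall f, (f < length E)%nat -> btw (hp f c) (hv f v) (hp f q)) \/
                  (forall f, (f < length E)%nat -> btw (hv f w) (hv f v) (hp f q))).
  { apply NNPP. intros Hn. apply not_or_and in Hn. destruct Hn as [Hn1 Hn2].
    apply not_all_ex_not in Hn1. destruct Hn1 as [f Hn1]. apply imply_to_and in Hn1.
    apply not_all_ex_not in Hn2. destruct Hn2 as [g Hn2]. apply imply_to_and in Hn2.
    destruct Hn1 as [Hf Hn1]. destruct Hn2 as [Hg Hn2].
    pose proof (len_pos f Hf). pose proof (len_pos g Hg).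
    rewrite (btw_bin _ _ _ (len f)) in Hn1 by (auto using hp_range, hv_range, hv_bin).
    rewrite (btw_bin _ _ _ (len g)) in Hn2 by (auto using hp_range, hv_range, hv_bin).
    apply not_or_and in Hn1. apply not_or_and in Hn2.
    destruct Hn1 as [Hcf Hqf]. destruct Hn2 as [Hwg Hqg].
    assert (Hwf : hv f w = hv f v).
    { specialize (Hbf f Hf). rewrite (btw_bin _ _ _ (len f)) in Hbf by
        (auto using hp_range, hv_range, hv_bin; apply hv_range; auto). tauto. }
    assert (Hcg : hp g c = hv g v).
    { specialize (Hbf g Hg). rewrite (btw_bin _ _ _ (len g)) in Hbf by
        (auto using hp_range, hv_range, hv_bin; apply hv_range; auto). tauto. }
    assert (Hfg : f <> g) by (intros ->; congruence).
    destruct (rep c f g (hv f v) (len g - hv g v) Hc Hf Hg Hfg (hv_bin f v))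
      as [wc [Hwc [Hwc1 Hwc2]]].
    { destruct (hv_bin g v) as [-> | ->]; [right|left]; ring. }
    { auto. }
    { rewrite Hcg. destruct (hv_bin g v) as [-> | ->]; lra. }
    destruct (rep q f g (hv f v) (hv g v) Hq Hf Hg Hfg (hv_bin f v) (hv_bin g v) Hqf Hqg)
      as [wq [Hwq [Hwq1 Hwq2]]].
    assert (Hwc2' : hv g wc = hv g v).
    { destruct (hv_bin g v) as [A|A]; destruct (hv_bin g wc) as [B|B]; rewrite A, B in *; lra. }
    destruct (Req_dec_T (hv g (src f)) (hv g v)) as [Heq|Hne].
    - assert (hv g w = hv g wq) by (apply (bin3 _ _ (hv g v) (len g)); auto using hv_bin).
      assert (hv f w = hv f wq).
      { apply (KS g f w wq); auto. congruence. }
      congruence.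
    - assert (hv f v = hv f wc).
      { apply (KS g f v wc); auto. }
      congruence. }
  pose proof (D_nonneg c (PV v)). pose proof (D_nonneg (PV v) (PV w)).
  pose proof (D_tri (PV v) (PV w) q). pose proof (D_tri (PV v) c q).
  rewrite (D_sym (PV v) c) in H2.
  destruct Hdich as [Hd|Hd].
  - assert (Hx : D c (PV v) + D (PV v) q = D c q) by (apply D_btw; auto).
    rewrite <- Hx. nra.
  - assert (Hx : D (PV w) (PV v) + D (PV v) q = D (PV w) q) by (apply D_btw; auto).
    rewrite (D_sym (PV w)) in Hx. rewrite <- Hx. nra.
Qed.

Lemma geo_main n (p : nat -> nat) c : (0 < n)%nat -> (forall i, (i < n)%nat -> (p i < N)%nat) ->
  valid_pt N E c ->
  exists z, valid_pt N E z /\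
    (exists a b, (a < n)%nat /\ (b < n)%nat /\
        D (PV (p a)) z + D z (PV (p b)) = D (PV (p a)) (PV (p b))) /\
    (z = c \/ exists v, z = PV v /\ (v < N)%nat /\
        forall i, (i < n)%nat -> D c z + D z (PV (p i)) = D c (PV (p i))).
Proof.
  intros Hn Hp Hc.
  destruct (classic (exists a b, (a < n)%nat /\ (b < n)%nat /\
      forall f, (f < length E)%nat -> btw (hv f (p a)) (hp f c) (hv f (p b)))) as [HK|HK].
  { exists c. split; auto. split; [|left; auto].
    destruct HK as [a [b [Ha [Hb H]]]]. exists a, b. split; auto. split; auto.
    apply D_btw. exact H. }
  set (VM := fun v => exists a b, (a < n)%nat /\ (b < n)%nat /\
      forall f, (f < length E)%nat -> btw (hv f (p a)) (hv f v) (hv f (p b))).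
  destruct (argmin_nat VM (fun v => D c (PV v)) N) as [z0 [Hz0 [HVM Hmin]]].
  { exists (p 0%nat). split; auto. exists 0%nat, 0%nat. split; auto. split; auto.
    intros f Hf. unfold btw. replace (hv f (p 0%nat) - hv f (p 0%nat)) with 0 by ring.
    rewrite Rabs_R0. lra. }
  exists (PV z0). split; [simpl; auto|]. split.
  { destruct HVM as [a [b [Ha [Hb H]]]]. exists a, b. split; auto. split; auto.
    apply D_btw. exact H. }
  right. exists z0. split; auto. split; auto. intros i Hi. apply D_btw. simpl.
  intros e He. apply NNPP. intros Hnb.
  pose proof (len_pos e He) as HLe.
  assert (Hpi := Hp i Hi).
  rewrite (btw_bin _ _ _ (len e)) in Hnb by (auto using hp_range, hv_range, hv_bin).
  apply not_or_and in Hnb. destruct Hnb as [Hce Hpe].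
  destruct HVM as [a [b [Ha [Hb Hab]]]].
  assert (Ha' : exists a', (a' < n)%nat /\ hv e (p a') = hv e z0).
  { specialize (Hab e He). rewrite (btw_bin _ _ _ (len e)) in Hab by
      (auto using hv_range, hv_bin). destruct Hab; [exists a|exists b]; auto. }
  clear a b Ha Hb Hab. destruct Ha' as [a [Ha Haz]].
  assert (Hx : exists x, (x = src e \/ x = dst e) /\ hv e x = hv e (p i)).
  { destruct (hv_bin e (p i)) as [A|A].
    - exists (src e). split; auto. rewrite hv_src; auto.
    - exists (dst e). split; auto. rewrite hv_dst; auto. }
  destruct Hx as [x [Hxe Hxv]].
  assert (HxN : (x < N)%nat) by (destruct Hxe as [-> | ->]; [apply src_lt|apply dst_lt]; auto).
  assert (Hxf : forall f, (f < length E)%nat -> f <> e -> hv f x = hv f (src e)).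
  { intros f Hf Hfe. destruct Hxe as [-> | ->]; auto. symmetry; apply hv_src_dst; auto. }
  assert (S1 : forall f, (f < length E)%nat -> btw (hv f (p a)) (hv f x) (hv f (p i))).
  { intros f Hf. destruct (Nat.eq_dec f e) as [->|Hfe].
    - rewrite Haz, Hxv. unfold btw. replace (hv e (p i) - hv e (p i)) with 0 by ring.
      rewrite Rabs_R0. lra.
    - pose proof (len_pos f Hf).
      rewrite (btw_bin _ _ _ (len f)) by (auto using hv_range, hv_bin).
      destruct (Req_dec_T (hv f (p a)) (hv f x)); auto.
      destruct (Req_dec_T (hv f (p i)) (hv f x)); auto. exfalso.
      assert (hv f (p a) = hv f (p i)) by (apply (bin3 _ _ (hv f x) (len f)); auto using hv_bin).
      assert (hv e (p a) = hv e (p i)).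
      { apply (KS f e); auto. rewrite <- Hxf; auto. }
      congruence. }
  destruct (classic (hp e c = 0 \/ hp e c = len e)) as [Hcb|Hcnb].
  -
    assert (Hlt : D c (PV x) < D c (PV z0)).
    { unfold D. apply (sumR_lt _ _ _ e); auto.
      - intros f Hf. simpl. destruct (Nat.eq_dec f e) as [->|Hfe].
        + assert (hp e c = hv e (p i)) by (apply (bin3 _ _ (hv e z0) (len e)); auto using hv_bin).
          rewrite Hxv, H. replace (hv e (p i) - hv e (p i)) with 0 by ring. rewrite Rabs_R0.
          apply Rabs_pos.
        + destruct (Req_dec_T (hv f x) (hv f z0)) as [Heq|Hne]; [rewrite Heq; lra|].
          destruct (Req_dec_T (hp f c) (hv f x)) as [Heq'|Hne'].
          * rewrite Heq'. replace (hv f x - hv f x) with 0 by ring. rewrite Rabs_R0.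
            apply Rabs_pos.
          * exfalso.
            destruct (rep c f e (hv f x) (hv e z0) Hc Hf He Hfe (hv_bin f x) (hv_bin e z0) Hne' Hce)
              as [r [Hr [Hr1 Hr2]]].
            assert (hv f r = hv f z0) by (apply (bin3 _ _ (hv f x) (len f)); auto using hv_bin).
            assert (hv e r = hv e z0).
            { apply (KS f e); auto. rewrite <- Hxf; auto; congruence. }
            congruence.
      - simpl. destruct (Nat.eq_dec e e); [|congruence].
        assert (hp e c = hv e (p i)) by (apply (bin3 _ _ (hv e z0) (len e)); auto using hv_bin).
        rewrite Hxv, H. replace (hv e (p i) - hv e (p i)) with 0 by ring. rewrite Rabs_R0.
        apply Rabs_pos_lt. intros Hz. apply Hce. lra. }
    assert (D c (PV z0) <= D c (PV x)).
    { apply Hmin; auto. exists a, i. split; auto. }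
    lra.
  -
    assert (Hcs : exists s, c = PE e s).
    { apply NNPP. intros Hno. apply Hcnb. apply hp_bin. intros s Hs. apply Hno. exists s; auto. }
    destruct Hcs as [s ->]. apply HK. exists a, i. split; auto. split; auto.
    intros g Hg. simpl. destruct (Nat.eq_dec g e) as [->|Hge].
    + simpl in Hc. rewrite Haz. unfold len in *.
      assert (Hze : hv e z0 <> hv e (p i)) by auto.
      unfold btw. destruct (hv_bin e z0) as [A|A]; destruct (hv_bin e (p i)) as [B|B];
        rewrite A, B in *; unfold len in *; try congruence;
        unfold Rabs; repeat destruct Rcase_abs; lra.
    + rewrite <- Hxf by auto. apply S1; auto.
Qed.

Lemma Ed_comb (w : nat -> R) (m : nat -> nat) (loc : nat -> nat -> pt) (f : nat -> nat -> R) i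
  z c pi A B C : (forall j, (j < m i)%nat -> 0 <= f i j) -> 0 <= w i ->
  (forall j, (j < m i)%nat -> A * Defs.dist E z (loc i j) <=
     B * Defs.dist E c (loc i j) + C * Defs.dist E pi (loc i j)) ->
  A * Ed E w m loc f z i <= B * Ed E w m loc f c i + C * Ed E w m loc f pi i.
Proof.
  intros Hf Hw H. unfold Ed.
  replace (A * (w i * sumR (m i) (fun j => f i j * Defs.dist E z (loc i j)))) with
    (w i * sumR (m i) (fun j => f i j * (A * Defs.dist E z (loc i j)))).
  2:{ rewrite (sumR_ext _ (fun j => f i j * (A * Defs.dist E z (loc i j)))
        (fun j => A * (f i j * Defs.dist E z (loc i j)))) by (intros; ring).
      rewrite sumR_scal. ring. }
  replace (B * (w i * sumR (m i) (fun j => f i j * Defs.dist E c (loc i j))) +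
     C * (w i * sumR (m i) (fun j => f i j * Defs.dist E pi (loc i j)))) with
    (w i * sumR (m i) (fun j => f i j * (B * Defs.dist E c (loc i j) + C * Defs.dist E pi (loc i j)))).
  2:{ rewrite (sumR_ext _ (fun j => f i j * (B * Defs.dist E c (loc i j) + C * Defs.dist E pi (loc i j)))
        (fun j => B * (f i j * Defs.dist E c (loc i j)) + C * (f i j * Defs.dist E pi (loc i j))))
        by (intros; ring).
      rewrite sumR_plus, !sumR_scal. ring. }
  apply Rmult_le_compat_l; auto. apply sumR_le. intros j Hj.
  apply Rmult_le_compat_l; auto.
Qed.

Lemma center_move n (w : nat -> R) (m : nat -> nat) (loc : nat -> nat -> pt)
  (f : nat -> nat -> R) (p : nat -> nat) (lam : R) c :
  (0 < n)%nat ->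
  (forall i, (i < n)%nat ->
     0 <= w i /\
     (forall j, (j < m i)%nat -> valid_pt N E (loc i j) /\ 0 <= f i j) /\
     sumR (m i) (f i) = 1) ->
  (forall i, (i < n)%nat -> (p i < N)%nat) ->
  (forall i, (i < n)%nat -> Ed E w m loc f (PV (p i)) i <= lam) ->
  valid_pt N E c ->
  exists z, valid_pt N E z /\ in_min_subtree N E n p z /\
    forall i, (i < n)%nat -> Ed E w m loc f c i <= lam -> Ed E w m loc f z i <= lam.
Proof.
  intros Hn Hunc Hp Hcov Hc.
  destruct (geo_main n p c Hn Hp Hc) as [z [Hz [Hab Hcase]]].
  exists z. split; auto. split.
  { destruct Hab as [a [b [Ha [Hb Heq]]]]. intros S HS HSm.
    apply (HS (PV (p a)) (PV (p b)) z); try (simpl; auto; fail).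
    rewrite !dist_D by (simpl; auto). exact Heq. }
  intros i Hi Hci. destruct Hcase as [->|[v [-> [Hv Hbt]]]]; auto.
  destruct (Hunc i Hi) as [Hw [Hloc _]].
  specialize (Hbt i Hi). pose proof (Hcov i Hi) as Hpi.
  pose proof (D_nonneg c (PV v)). pose proof (D_nonneg (PV v) (PV (p i))).
  destruct (Req_dec_T (D c (PV v)) 0) as [Ha0|Ha0].
  - assert (1 * Ed E w m loc f (PV v) i <= 1 * Ed E w m loc f c i + 0 * Ed E w m loc f (PV (p i)) i).
    { apply Ed_comb; auto; [intros; apply Hloc; auto|].
      intros j Hj. destruct (Hloc j Hj) as [Hq _].
      rewrite !dist_D by (simpl; auto).
      pose proof (D_tri (PV v) c (loc i j)). rewrite (D_sym (PV v) c), Ha0 in H1. lra. }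
    lra.
  - assert (Hcomb : (D c (PV v) + D (PV v) (PV (p i))) * Ed E w m loc f (PV v) i <=
       D (PV v) (PV (p i)) * Ed E w m loc f c i + D c (PV v) * Ed E w m loc f (PV (p i)) i).
    { apply Ed_comb; auto; [intros; apply Hloc; auto|].
      intros j Hj. destruct (Hloc j Hj) as [Hq _].
      rewrite !dist_D by (simpl; auto).
      apply convex_D; auto. }
    assert (0 < D c (PV v)) by lra.
    set (A := D c (PV v)) in *. set (B := D (PV v) (PV (p i))) in *.
    assert ((A + B) * Ed E w m loc f (PV v) i <= (A + B) * lam) by nra.
    apply Rmult_le_reg_l with (A + B); lra.
Qed.

End Tree.

Open Scope R_scope.
Open Scope R_scope.

Lemma min_nat (P : nat -> Prop) : (exists k, P k) -> exists k, P k /\ forall k', P k' -> (k <= k')%nat.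
Proof.
  intros [k Hk]. revert Hk. induction k as [k IH] using (well_founded_induction Wf_nat.lt_wf).
  intros Hk. destruct (classic (exists k', (k' < k)%nat /\ P k')) as [[k' [Hlt Hk']]|Hno].
  - apply (IH k' Hlt Hk').
  - exists k. split; auto. intros k' Hk'. destruct (Nat.le_gt_cases k k'); auto.
    exfalso. apply Hno. exists k'; auto.
Qed.

Theorem lemma2 (N : nat) (E : list edge) (HT : is_tree N E)
  (n : nat) (w : nat -> R) (m : nat -> nat) (loc : nat -> nat -> pt)
  (f : nat -> nat -> R) (p : nat -> nat) (lam : R)
  (Hlam : 0 <= lam)
  (Hunc : forall i, (i < n)%nat ->
     0 <= w i /\
     (forall j, (j < m i)%nat -> valid_pt N E (loc i j) /\ 0 <= f i j) /\
     sumR (m i) (f i) = 1)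
  (Hmed : forall i, (i < n)%nat ->
     (p i < N)%nat /\
     forall x, valid_pt N E x -> Ed E w m loc f (PV (p i)) i <= Ed E w m loc f x i)
  (Hcov : forall i, (i < n)%nat -> Ed E w m loc f (PV (p i)) i <= lam) :
  exists C : list pt,
    (forall c, In c C -> valid_pt N E c /\ in_min_subtree N E n p c) /\
    covers_all E n w m loc f lam C /\
    (forall C' : list pt, (forall c, In c C' -> valid_pt N E c) ->
       covers_all E n w m loc f lam C' -> (length C <= length C')%nat).
Proof.
  destruct HT as [Hedge [HN Hconn]].
  destruct (Nat.eq_dec n 0) as [->|Hn].
  { exists []. split; [simpl; tauto|]. split; [intros i Hi; lia|]. intros; simpl; lia. }
  assert (Hp : forall i, (i < n)%nat -> (p i < N)%nat) by (intros i Hi; apply Hmed; auto).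
  destruct (min_nat (fun k => exists C, (forall c, In c C -> valid_pt N E c) /\
      covers_all E n w m loc f lam C /\ length C = k)) as [k0 [[C0 [HC0v [HC0c HC0l]]] Hmin]].
  { exists n. exists (map (fun i => PV (p i)) (seq 0 n)). split; [|split].
    - intros c Hc. apply in_map_iff in Hc. destruct Hc as [i [<- Hi]]. apply in_seq in Hi.
      simpl. apply Hp. lia.
    - intros i Hi. exists (PV (p i)). split; [|apply Hcov; auto].
      apply in_map_iff. exists i. split; auto. apply in_seq. lia.
    - rewrite length_map, length_seq. auto. }
  assert (Hmap : forall C0, (forall c, In c C0 -> valid_pt N E c) ->
     exists C, length C = length C0 /\
       (forall c, In c C -> valid_pt N E c /\ in_min_subtree N E n p c) /\
       (forall i, (i < n)%nat -> (exists c, In c C0 /\ Ed E w m loc f c i <= lam) ->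
           exists c, In c C /\ Ed E w m loc f c i <= lam)).
  { induction C1 as [|c C1 IH]; intros Hv.
    - exists []. split; auto. split; [simpl; tauto|]. intros i Hi [c [[] _]].
    - destruct IH as [C [Hl [Hc Hcov']]]; [intros; apply Hv; simpl; auto|].
      destruct (center_move N E Hedge HN Hconn n w m loc f p lam c ltac:(lia) Hunc Hp Hcov
        (Hv c (or_introl eq_refl))) as [z [Hz [Hzm Hzc]]].
      exists (z :: C). split; [simpl; auto|]. split.
      + intros c' [<-|Hc']; auto.
      + intros i Hi [c' [[<-|Hc'] Hle]].
        * exists z. split; [simpl; auto|]. apply Hzc; auto.
        * destruct (Hcov' i Hi) as [c'' [H1 H2]]; [exists c'; auto|]. exists c''. simpl; auto. }
  destruct (Hmap C0 HC0v) as [C [Hl [Hc Hcv]]].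
  exists C. split; auto. split.
  - intros i Hi. apply Hcv; auto.
  - intros C' Hv' Hc'. rewrite Hl, HC0l. apply Hmin. exists C'; auto.
Qed.
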